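(* Let $0<e_0\le1$ and let $d\ge1$ be an integer. For any instance of $P_m, e_{i,k}\ge e_0\mid\mid C_{\max}$, Algorithm 1 with parameter $d$ returns a schedule with makespan at most $\left(1+\frac{m}{d\, e_0}\right)C^*_{\max}$, where $C^*_{\max}$ is the optimal makespan.
   Context: Shared-processing parallel machine scheduling: $m$ identical machines $M_1,\dots,M_m$, $n$ primary jobs available at time $0$ with processing times $p_j>0$, each processed without interruption on one machine, jobs on a machine processed one after another. The time axis of machine $M_i$ is partitioned into consecutive intervals $(0,t_{i,1}],(t_{i,1},t_{i,2}],\dots$ with sharing ratios $e_{i,k}\in(0,1]$; during the $k$-th interval $M_i$ processes primary work at rate $e_{i,k}$. In $P_m, e_{i,k}\ge e_0\mid\mid C_{\max}$ all sharing ratios satisfy $e_{i,k}\ge e_0$ and the goal is to minimize the makespan. LS-ECT: jobs of a list are scheduled one by one; each job is appended after the jobs already assigned to some machine, choosing the machine on which it would complete earliest. Algorithm 1 (parameter $d$): (1) find the $d$ largest jobs (the ''large'' jobs); (2) for each of the possible assignments of the large jobs to the machines, schedule the large jobs on their assigned machines and then schedule the remaining jobs using LS-ECT; (3) return, among all schedules obtained in step (2), one with minimum makespan. *)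

(* Defs.v *)
From HB Require Import structures.
From mathcomp Require Import all_boot all_order all_algebra.
From mathcomp Require Import reals.
Set Implicit Arguments. Unset Strict Implicit. Unset Printing Implicit Defensive.
Import Order.TTheory GRing.Theory Num.Theory.
Local Open Scope ring_scope.

(* Sharing profile of one machine: breakpoints t_0 = 0 < t_1 < t_2 < ...
   (the k-th interval, 0-indexed, is (bp k, bp k.+1]) and sharing ratios
   ratio k on that interval. *)
Record profile (R : realType) := Profile { bp : nat -> R ; ratio : nat -> R }.

Definition valid_profile (R : realType) (e0 : R) (P : profile R) : Prop :=
  [/\ bp P 0 = 0,
      (forall k, bp P k < bp P k.+1),
      (forall T : R, exists k, T <= bp P k) &
      (forall k, e0 <= ratio P k <= 1)].

(* Primary work processed on the machine during (0, T] by the first N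
   intervals; equals the total work processed during (0,T] when T <= bp P N. *)
Definition workN (R : realType) (P : profile R) (N : nat) (T : R) : R :=
  \sum_(k < N) ratio P k * (Num.min T (bp P k.+1) - Num.min T (bp P k)).

(* A job of processing time q started at time s, processed without
   interruption, completes at time C. *)
Definition processes (R : realType) (P : profile R) (s C q : R) : Prop :=
  0 <= s /\ s <= C /\
  exists N, C <= bp P N /\ workN P N C - workN P N s = q.

Definition mkspan (R : realType) (I : finType) (C : I -> R) : R :=
  \big[Num.max/0]_(i : I) C i.

Definition feasible (R : realType) (m n : nat) (prof : 'I_m -> profile R)
  (p : 'I_n -> R) (a : 'I_n -> 'I_m) (S C : 'I_n -> R) : Prop :=
  (forall j, processes (prof (a j)) (S j) (C j) (p j)) /\
  (forall j j', j != j' -> a j = a j' -> C j <= S j' \/ C j' <= S j).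

Inductive seq_finish (R : realType) (n : nat) (P : profile R) (p : 'I_n -> R)
  : R -> seq 'I_n -> R -> Prop :=
| sf_nil F : seq_finish P p F [::] F
| sf_cons F C j s G :
    processes P F C (p j) -> seq_finish P p C s G ->
    seq_finish P p F (j :: s) G.

(* LS-ECT: from machine sequences sq with finishing times F, schedule the jobs
   of list l one by one, each appended to a machine on which it completes
   earliest (ties broken arbitrarily), yielding sq' and F'. *)
Inductive lsect (R : realType) (m n : nat) (prof : 'I_m -> profile R)
  (p : 'I_n -> R) :
  ('I_m -> seq 'I_n) -> ('I_m -> R) -> seq 'I_n ->
  ('I_m -> seq 'I_n) -> ('I_m -> R) -> Prop :=
| ls_nil sq F : lsect prof p sq F [::] sq F
| ls_cons sq F j l i C sq' F' :
    processes (prof i) (F i) C (p j) ->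
    (forall i' C', processes (prof i') (F i') C' (p j) -> C <= C') ->
    lsect prof p (fun k => if k == i then rcons (sq k) j else sq k)
                 (fun k => if k == i then C else F k) l sq' F' ->
    lsect prof p sq F (j :: l) sq' F'.

Definition large_jobs (R : realType) (n : nat) (p : 'I_n -> R) (d : nat)
  (L : {set 'I_n}) : Prop :=
  #|L| = minn d n /\ (forall j k, j \in L -> k \notin L -> p k <= p j).

(* A schedule (machine sequences sq with finishing times F) obtained in step
   (2) for the assignment f of the large jobs L: the large jobs assigned to
   machine i are processed first on machine i from time 0 (in some order),
   then the remaining jobs (in some list order) are scheduled by LS-ECT. *)
Definition candidate (R : realType) (m n : nat) (prof : 'I_m -> profile R)
  (p : 'I_n -> R) (L : {set 'I_n}) (f : 'I_n -> 'I_m)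
  (sq : 'I_m -> seq 'I_n) (F : 'I_m -> R) : Prop :=
  exists (sq0 : 'I_m -> seq 'I_n) (F0 : 'I_m -> R) (l : seq 'I_n),
    [/\ (forall i, perm_eq (sq0 i) [seq j <- enum L | f j == i]),
        (forall i, seq_finish (prof i) p 0 (sq0 i) (F0 i)),
        perm_eq l (enum (~: L)) &
        lsect prof p sq0 F0 l sq F].

(* Output of Algorithm 1 (with large-job set L): a candidate schedule whose
   makespan is at most that of the schedule computed for every assignment
   of the large jobs. *)
Definition alg1_output (R : realType) (m n : nat) (prof : 'I_m -> profile R)
  (p : 'I_n -> R) (L : {set 'I_n}) (sq : 'I_m -> seq 'I_n) (F : 'I_m -> R)
  : Prop :=
  (exists f, candidate prof p L f sq F) /\
  (forall f : 'I_n -> 'I_m, exists sq' F',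
      candidate prof p L f sq' F' /\ mkspan F <= mkspan F').

(* Main.v *)
Require Import Defs.
From HB Require Import structures.
From mathcomp Require Import all_boot all_order all_algebra.
From mathcomp Require Import reals.
From mathcomp Require Import ring lra zify.
From mathcomp Require Import boolp classical_sets topology normedtype.
Import numFieldNormedType.Exports.
Import Order.TTheory GRing.Theory Num.Theory.
Local Open Scope ring_scope.

Section W.
Variables (R : realType) (e0 : R) (P : profile R).
Hypothesis he0 : 0 < e0 <= 1.
Hypothesis vP : valid_profile e0 P.

Lemma minE' (x y : R) : Num.min x y = if x <= y then x else y.
Proof. by case: leP. Qed.

Lemma maxE' (x y : R) : Num.max x y = if x <= y then y else x.
Proof. by case: leP. Qed.

Lemma g_nonneg (x y b b' : R) : x <= y -> b <= b' ->
  Num.min x b' - Num.min x b <= Num.min y b' - Num.min y b.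
Proof.
move=> h1 h2; rewrite !minE'.
case: (leP x b'); case: (leP x b); case: (leP y b'); case: (leP y b); lra.
Qed.

Lemma bp_mono k k' : (k <= k')%N -> bp P k <= bp P k'.
Proof.
case: vP => _ hinc _ _ /subnK <-; elim: (k' - k)%N => [|d IH] //.
by rewrite addSn; apply: (le_trans IH); apply/ltW.
Qed.

Lemma bp_ge0 k : 0 <= bp P k.
Proof. by case: (vP) => h0 _ _ _; rewrite -h0; apply: bp_mono. Qed.

Lemma workN_ext N N' T : (N <= N')%N -> T <= bp P N -> workN P N' T = workN P N T.
Proof.
move=> /subnK <- hT; elim: (N' - N)%N => [|d IH] //.
rewrite addSn /workN big_ord_recr /= -/(workN _ _ _) IH.
have h1 : T <= bp P (d + N)%N by apply: (le_trans hT); apply: bp_mono; lia.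
have h2 : T <= bp P (d + N).+1 by apply: (le_trans hT); apply: bp_mono; lia.
by rewrite !minE' h1 h2 subrr mulr0 addr0.
Qed.

Lemma workN_diff N x y : workN P N y - workN P N x =
  \sum_(k < N) Defs.ratio P k * ((Num.min y (bp P k.+1) - Num.min y (bp P k))
      - (Num.min x (bp P k.+1) - Num.min x (bp P k))).
Proof. by rewrite /workN -sumrB; apply: eq_bigr => k _; ring. Qed.

Lemma sum_g N x y : \sum_(k < N) ((Num.min y (bp P k.+1) - Num.min y (bp P k))
      - (Num.min x (bp P k.+1) - Num.min x (bp P k))) =
   (Num.min y (bp P N) - Num.min x (bp P N)) - (Num.min y (bp P 0) - Num.min x (bp P 0)).
Proof.
elim: N => [|N IH]; first by rewrite big_ord0 subrr.
rewrite big_ord_recr /= IH; ring.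
Qed.

Lemma workN_mono N x y : x <= y -> workN P N x <= workN P N y.
Proof.
move=> hxy; rewrite -subr_ge0 workN_diff; apply: sumr_ge0 => k _.
case: vP => _ hinc _ hr; apply: mulr_ge0.
  by case/andP: (hr k) => h _; apply: le_trans h; case/andP: he0 => /ltW.
by rewrite subr_ge0; apply: g_nonneg => //; apply/ltW.
Qed.

Lemma workN_bounds N x y : 0 <= x -> x <= y -> y <= bp P N ->
  e0 * (y - x) <= workN P N y - workN P N x <= y - x.
Proof.
move=> hx hxy hy; rewrite workN_diff.
have hs := sum_g N x y.
case: (vP) => h0 hinc _ hr.
have -> : y - x = \sum_(k < N) ((Num.min y (bp P k.+1) - Num.min y (bp P k))
      - (Num.min x (bp P k.+1) - Num.min x (bp P k))).
  rewrite hs h0 !minE' hy (le_trans hxy hy); case: (leP y 0); case: (leP x 0); lra.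
rewrite mulr_sumr; apply/andP; split; apply: ler_sum => k _;
  have hg : 0 <= (Num.min y (bp P k.+1) - Num.min y (bp P k))
      - (Num.min x (bp P k.+1) - Num.min x (bp P k))
    by rewrite subr_ge0; apply: g_nonneg => //; apply/ltW.
  by apply: ler_wpM2r => //; case/andP: (hr k).
by rewrite -[X in _ <= X]mul1r; apply: ler_wpM2r => //; case/andP: (hr k).
Qed.

Lemma workN0 N : workN P N 0 = 0.
Proof.
rewrite /workN big1 // => k _.
by rewrite !minE' !bp_ge0 subrr mulr0.
Qed.

Lemma proc_W s C q N : processes P s C q -> C <= bp P N ->
  workN P N C - workN P N s = q.
Proof.
case=> hs [hsC [N0 [hC <-]]] hCN.
have hK1 := workN_ext _ _ _ (leq_maxl N N0) hCN.
have hK2 := workN_ext _ _ _ (leq_maxr N N0) hC.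
have hK3 := workN_ext _ _ _ (leq_maxl N N0) (le_trans hsC hCN).
have hK4 := workN_ext _ _ _ (leq_maxr N N0) (le_trans hsC hC).
by rewrite -hK1 -hK2 -hK3 -hK4.
Qed.


Lemma workN_cont N x : {for x, continuous (workN P N)}%classic.
Proof.
elim: N => [|N IH].
  have -> : workN P 0 = (fun=> 0 : R).
    by apply: funext => T; rewrite /workN big_ord0.
  exact: cst_continuous.
have -> : workN P N.+1 = (fun T => workN P N T + Defs.ratio P N * (Num.min T (bp P N.+1) - Num.min T (bp P N))).
  by apply: funext => T; rewrite /workN big_ord_recr.
apply: continuousD => //.
apply: continuousM; first exact: cst_continuous.
apply: continuousB; apply: continuous_min => //; exact: cst_continuous.
Qed.

Lemma proc_exists s q N : 0 <= s -> 0 <= q -> s + q / e0 <= bp P N ->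
  exists C, processes P s C q /\ C <= s + q / e0.
Proof.
move=> hs hq hb.
have he : 0 < e0 by case/andP: he0.
have hq' : 0 <= q / e0 by apply: divr_ge0 => //; apply: ltW.
have hab : s <= s + q / e0 by lra.
have [h1 _] := andP (workN_bounds N _ _ hs hab hb).
have hq2 : e0 * (s + q / e0 - s) = q.
  rewrite addrC addKr mulrC -mulrA mulVf ?mulr1 //; exact: lt0r_neq0.
rewrite hq2 in h1.
have hcont : {within `[s, s + q / e0], continuous (workN P N)}%classic.
  apply: continuous_subspaceT => x; exact: workN_cont.
have hm := workN_mono N _ _ hab.
have hv : Num.min (workN P N s) (workN P N (s + q / e0)) <= workN P N s + q <=
          Num.max (workN P N s) (workN P N (s + q / e0)).
  rewrite minE' maxE' hm /=; apply/andP; split; lra.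
have [c + hfc] := @IVT R (workN P N) s (s + q / e0) (workN P N s + q) hab hcont hv.
rewrite in_itv /= => /andP [hc1 hc2].
exists c; split => //; split => //; split => //.
exists N; split; first exact: le_trans hc2 hb.
by rewrite hfc; ring.
Qed.

Lemma seqf (n : nat) (p : 'I_n -> R) F0 s G : seq_finish P p F0 s G ->
  F0 <= G /\ forall N, G <= bp P N -> workN P N G - workN P N F0 = \sum_(j <- s) p j.
Proof.
elim=> [F|F C j s' G' hpr _ [hCG IH]].
  by split => // N _; rewrite subrr big_nil.
have [hF [hFC _]] := hpr.
split; first exact: le_trans hCG.
move=> N hG; rewrite big_cons -(IH N hG) -(proc_W _ _ _ _ hpr (le_trans hCG hG)); ring.
Qed.

End W.
Arguments bp_mono {R e0 P}.
Arguments bp_ge0 {R e0 P}.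
Arguments workN_ext {R e0 P}.
Arguments workN_mono {R e0 P}.
Arguments workN_bounds {R e0 P}.
Arguments workN0 {R e0 P}.
Arguments proc_W {R e0 P}.
Arguments proc_exists {R e0 P}.
Arguments seqf {R e0 P}.

Lemma disj (R : realType) (n : nat) (W : R -> R) (S C : 'I_n -> R)
  (Wm : forall x y, x <= y -> W x <= W y) (k : nat) :
  forall (A : {set 'I_n}) t0 T, (#|A| <= k)%N -> t0 <= T ->
  (forall j, j \in A -> [/\ t0 <= S j, S j <= C j & C j <= T]) ->
  (forall j j', j \in A -> j' \in A -> j != j' -> C j <= S j' \/ C j' <= S j) ->
  \sum_(j in A) (W (C j) - W (S j)) <= W T - W t0.
Proof.
elim: k => [|k IH] A t0 T hk htT hin hd.
  move: hk; rewrite leqn0 => /eqP /cards0_eq ->.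
  by rewrite big_set0 subr_ge0 Wm.
case: (set_0Vmem A) => [->|[j hj]].
  by rewrite big_set0 subr_ge0 Wm.
have [hj1 hj2 hj3] := hin j hj.
rewrite (big_setD1 _ hj) /= (big_setID [set j' | C j' <= S j]) /=.
have hc : (#|A :\ j| <= k)%N.
  by move: hk; rewrite (cardsD1 j A) hj.
have h1 : \sum_(i in (A :\ j) :&: [set j' | C j' <= S j]) (W (C i) - W (S i))
   <= W (S j) - W t0.
  apply: IH => //.
  - exact: leq_trans (subset_leq_card (subsetIl _ _)) hc.
  - by move=> i; rewrite !inE => /andP [/andP [_ hi] hCi]; have [? ? ?] := hin i hi; split.
  - by move=> i i'; rewrite !inE => /andP [/andP [_ hi] _] /andP [/andP [_ hi'] _]; exact: hd.
have h2 : \sum_(i in (A :\ j) :\: [set j' | C j' <= S j]) (W (C i) - W (S i))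
   <= W T - W (C j).
  apply: IH => //.
  - exact: leq_trans (subset_leq_card (subsetDl _ _)) hc.
  - move=> i; rewrite !inE => /andP [hCi /andP [hij hi]]; have [? ? ?] := hin i hi; split => //.
    case: (hd j i hj hi); first by rewrite eq_sym.
    + by [].
    + by move=> h; rewrite h in hCi.
  - by move=> i i'; rewrite !inE => /andP [_ /andP [_ hi]] /andP [_ /andP [_ hi']]; exact: hd.
lra.
Qed.

Lemma mk_ge (R : realType) (I : finType) (C : I -> R) j : C j <= mkspan C.
Proof.
rewrite /mkspan; have : j \in index_enum I by rewrite mem_index_enum.
elim: (index_enum I) => // x r IH; rewrite big_cons inE => /orP [/eqP <-|/IH h].
  by rewrite le_max lexx.
by rewrite le_max h orbT.
Qed.

Lemma mk_le (R : realType) (I : finType) (C : I -> R) B :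
  0 <= B -> (forall i, C i <= B) -> mkspan C <= B.
Proof.
move=> h0 h; rewrite /mkspan; elim/big_ind: _ => // x y hx hy.
by rewrite ge_max hx hy.
Qed.


Theorem lemma1 (R : realType) (e0 : R) (d m n : nat)
  (prof : 'I_m -> profile R) (p : 'I_n -> R) (L : {set 'I_n})
  (sq : 'I_m -> seq 'I_n) (F : 'I_m -> R)
  (a : 'I_n -> 'I_m) (S C : 'I_n -> R) :
  0 < e0 <= 1 -> (1 <= d)%N ->
  (forall i, valid_profile e0 (prof i)) ->
  (forall j, 0 < p j) ->
  large_jobs p d L ->
  alg1_output prof p L sq F ->
  feasible prof p a S C ->
  mkspan F <= (1 + m%:R / (d%:R * e0)) * mkspan C.
Proof.
move=> he0 hd hval hp [hL1 hL2] [_ hall] [hproc hdisj].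
have he : 0 < e0 by case/andP: he0.
set Cs := mkspan C.
have hCj : forall j, C j <= Cs by move=> j; exact: mk_ge.
have hCs0 : 0 <= Cs.
  rewrite /Cs /mkspan; elim/big_ind: _ => //; first by move=> x y hx _; rewrite le_max hx.
  move=> j _; have [h1 [h2 _]] := hproc j; exact: le_trans h2.
set Bf := (1 + m%:R / (d%:R * e0)) * Cs.
have hBf : Cs <= Bf.
  rewrite /Bf mulrDl mul1r lerDl; apply: mulr_ge0 => //; apply: divr_ge0 => //.
  by apply: mulr_ge0 => //; apply: ltW.
have [sq' [F' [[sq0 [F0 [l [hsq0 hsf hl hls]]]] hle]]] := hall a.
apply: le_trans hle _; apply: mk_le; first exact: le_trans hBf.
have [Ns hNs] : exists Ns : 'I_m -> nat, forall i, Bf + 1 <= bp (prof i) (Ns i).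
  apply: (@fin_all_exists _ (fun _ => nat) (fun i k => Bf + 1 <= bp (prof i) k)) => i.
  by case: (hval i) => _ _ h _.
set W := fun i => workN (prof i) (Ns i).
have hmach : forall i N, Cs <= bp (prof i) N ->
    \sum_(j | a j == i) p j <= workN (prof i) N Cs.
  move=> i N hN.
  suff : \sum_(j | a j == i) p j <= workN (prof i) N Cs - workN (prof i) N 0.
    by rewrite (workN0 (hval i) N) subr0.
  rewrite (eq_bigl (fun j => j \in [set j | a j == i])); last by move=> j; rewrite inE.
  rewrite (eq_bigr (fun j => workN (prof i) N (C j) - workN (prof i) N (S j))); last first.
    move=> j; rewrite inE => /eqP hj; have := hproc j; rewrite hj => hpj.
    by rewrite (proc_W he0 (hval i) _ _ _ N hpj (le_trans (hCj j) hN)).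
  apply: (@disj R n (workN (prof i) N) S C (workN_mono he0 (hval i) N)
     #|[set j | a j == i]| [set j | a j == i] 0 Cs) => //.
  - move=> j; rewrite inE => /eqP hj; have [h1 [h2 _]] := hproc j; split => //.
  - move=> j j'; rewrite !inE => /eqP hj /eqP hj' hjj'; apply: hdisj => //; by rewrite hj hj'.
have hPtot : \sum_j p j <= \sum_i W i Cs.
  rewrite (partition_big a xpredT) //=; apply: ler_sum => i _.
  apply: hmach; apply: le_trans (hNs i); lra.
have hWCs : \sum_i W i Cs <= m%:R * Cs.
  have -> : m%:R * Cs = \sum_(i < m) Cs by rewrite sumr_const card_ord mulr_natl.
  apply: ler_sum => i _; rewrite /W.
  have hb : Cs <= bp (prof i) (Ns i) by apply: le_trans (hNs i); lra.
  have [_ h] := andP (workN_bounds (hval i) (Ns i) 0 Cs (lexx 0) hCs0 hb).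
  by move: h; rewrite (workN0 (hval i)) !subr0.
have hsplit : \sum_j p j = \sum_(j in L) p j + \sum_(j in ~: L) p j.
  rewrite (bigID (fun j => j \in L)) /=; congr (_ + _); apply: eq_bigl => j; by rewrite inE.
have hsmall : forall j, j \notin L -> Cs + p j / e0 <= Bf.
  move=> j hj.
  have hcL : #|L| = d.
    have h1 : (0 < #|~: L|)%N by apply/card_gt0P; exists j; rewrite inE.
    have h2 := cardsC L; rewrite card_ord in h2; lia.
  have h1 : p j *+ d <= \sum_(k in L) p k.
    rewrite -hcL -sumr_const; apply: ler_sum => k hk; apply: hL2 => //.
  have h2 : 0 <= \sum_(k in ~: L) p k by apply: sumr_ge0 => k _; apply: ltW.
  have h3 : d%:R * p j <= m%:R * Cs by rewrite -mulr_natl in h1; lra.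
  have hd0 : (0 : R) < d%:R by rewrite ltr0n.
  have -> : Bf = Cs + m%:R / (d%:R * e0) * Cs by rewrite /Bf mulrDl mul1r.
  have hid : m%:R / (d%:R * e0) * Cs - p j / e0 = (m%:R * Cs - d%:R * p j) / (d%:R * e0).
    field; apply/andP; split; [exact: lt0r_neq0|exact: lt0r_neq0].
  have : 0 <= (m%:R * Cs - d%:R * p j) / (d%:R * e0).
    apply: divr_ge0; first lra; apply: mulr_ge0; apply: ltW => //.
  lra.
have hF0 : forall i, 0 <= F0 i <= Cs /\ W i (F0 i) = \sum_(j <- sq0 i) p j.
  move=> i.
  have [hF0a hF0b] := seqf he0 (hval i) _ _ _ _ _ (hsf i).
  have hsumle : \sum_(j <- sq0 i) p j <= \sum_(j | a j == i) p j.
    rewrite (perm_big _ (hsq0 i)) big_filter big_enum_cond.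
    rewrite [X in _ <= X](bigID (fun j => j \in L)) /= -[X in X <= _]addr0.
    apply: lerD.
      rewrite (eq_bigl (fun j => (a j == i) && (j \in L))) ?lexx // => j /=.
      by rewrite andbC.
    by apply: sumr_ge0 => j _; apply: ltW.
  have hF0le : F0 i <= Cs.
    case: (hval i) => _ _ hex _.
    have [N hN] := hex (Num.max (F0 i) Cs).
    have hN1 : F0 i <= bp (prof i) N by apply: le_trans hN; rewrite le_max lexx.
    have hN2 : Cs <= bp (prof i) N by apply: le_trans hN; rewrite le_max lexx orbT.
    have h1 := hF0b N hN1; rewrite (workN0 (hval i)) subr0 in h1.
    have h2 := hmach i N hN2.
    case: (leP (F0 i) Cs) => // hlt; exfalso.
    have [h3 _] := andP (workN_bounds (hval i) N Cs (F0 i) hCs0 (ltW hlt) hN1).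
    have : 0 < e0 * (F0 i - Cs) by apply: mulr_gt0 => //; lra.
    lra.
  split; first by rewrite hF0a.
  rewrite /W; have := hF0b (Ns i); rewrite (workN0 (hval i)) subr0 => -> //.
  apply: le_trans (hNs i); lra.
have hinit : \sum_i W i (F0 i) + \sum_(j <- l) p j <= \sum_j p j.
  have -> : \sum_i W i (F0 i) = \sum_(j in L) p j.
    rewrite (eq_bigr (fun i => \sum_(j in L | a j == i) p j)); last first.
      move=> i _; have [_ ->] := hF0 i.
      by rewrite (perm_big _ (hsq0 i)) big_filter big_enum_cond.
    by rewrite [in RHS](partition_big a xpredT) //=.
  rewrite (perm_big _ hl) big_enum hsplit.
  by apply: lerD => //; apply: eq_le; apply: eq_bigl => j; rewrite inE.
have hlL : forall j, j \in l -> j \notin L.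
  by move=> j; rewrite (perm_mem hl) mem_enum inE.
have key : forall sqa Fa l0 sqb Fb, lsect prof p sqa Fa l0 sqb Fb ->
    (forall i, 0 <= Fa i <= Bf) -> (forall j, j \in l0 -> j \notin L) ->
    \sum_i W i (Fa i) + \sum_(j <- l0) p j <= \sum_j p j ->
    forall i, Fb i <= Bf.
  move=> sqa Fa l0 sqb Fb; elim => {sqa Fa l0 sqb Fb}
    [sqa Fa|sqa Fa j l0 i Cn sqb Fb hpr hmin _ IH] hb hnl hinv.
    by move=> i; case/andP: (hb i).
  have hjL : j \notin L by apply: hnl; rewrite inE eqxx.
  have hFi := hb i.
  have hsj := hsmall j hjL.
  have hCn : Cn <= Cs + p j / e0.
    case: (leP Cn (Cs + p j / e0)) => // hlt; exfalso.
    have hall' : forall i', Cs <= Fa i'.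
      move=> i'; case: (leP Cs (Fa i')) => // hlt'; exfalso.
      have [h0 _] := andP (hb i').
      have hq : 0 <= p j by apply: ltW.
      have hbnd : Fa i' + p j / e0 <= bp (prof i') (Ns i').
        apply: le_trans (hNs i'); lra.
      have [C' [hpC' hC'le]] := proc_exists he0 (hval i') _ _ _ h0 hq hbnd.
      have := hmin i' C' hpC'; lra.
    have h1 : \sum_i W i Cs <= \sum_i W i (Fa i).
      by apply: ler_sum => i' _; apply: (workN_mono he0 (hval i')).
    have h2 : 0 <= \sum_(j' <- l0) p j' by apply: sumr_ge0 => j' _; apply: ltW.
    have hpj := hp j.
    rewrite big_cons in hinv; lra.
  have hCn0 : Fa i <= Cn by case: hpr => _ [].
  apply: IH.
  - move=> k; case: eqP => _; last exact: hb.
    case/andP: hFi => ? ?; apply/andP; split; lra.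
  - by move=> j' hj'; apply: hnl; rewrite inE hj' orbT.
  - have hb' : Cn <= bp (prof i) (Ns i) by apply: le_trans (hNs i); lra.
    have hW : W i Cn - W i (Fa i) = p j := proc_W he0 (hval i) _ _ _ (Ns i) hpr hb'.
    rewrite (bigD1 i) //= eqxx.
    under eq_bigr => k /negbTE hk do rewrite hk.
    rewrite big_cons (bigD1 i) //= in hinv; lra.
move=> i; apply: (key _ _ _ _ _ hls) => //.
move=> i'; have [/andP [h1 h2] _] := hF0 i'; apply/andP; split => //; lra.
Qed.
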